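(* Let $\ell\ge2$ be an integer and $d=2^\ell-1$. Then the $d$-dimensional hypercube $Q_d$ has a spanning 2-connected subgraph $H$ with $\mathsf{tvc}(H)\le 2\,(2^{d-\ell}+2^{d/2-\ell})$.
   Context: $Q_d$ is the graph on $\{0,1\}^d$ in which two vectors are adjacent iff they differ in exactly one coordinate. A total vertex cover of a graph $H$ is a set $S\subseteq V(H)$ that is a vertex cover (every edge has an endpoint in $S$) and a total dominating set (every vertex of $H$, including those in $S$, has a neighbour in $S$); $\mathsf{tvc}(H)$ is the minimum size of a total vertex cover. *)

(* Defs.v *)
From HB Require Import structures.
From mathcomp Require Import all_boot all_order all_algebra.
Set Implicit Arguments. Unset Strict Implicit. Unset Printing Implicit Defensive.

Definition cube (d : nat) := {ffun 'I_d -> bool}.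

Definition cube_adj (d : nat) : rel (cube d) :=
  fun u v => #|[set i : 'I_d | u i != v i]| == 1.

Section Graphs.
Variable T : finType.

Definition spanning_subgraph (G H : rel T) : Prop :=
  symmetric H /\ subrel H G.

Definition connected_on (E : rel T) (S : {set T}) : Prop :=
  forall x y, x \in S -> y \in S ->
    connect [rel a b | [&& E a b, a \in S & b \in S]] x y.

Definition two_connected (E : rel T) : Prop :=
  2 < #|T| /\ connected_on E setT /\
  forall v : T, connected_on E [set~ v].

Definition is_tvc (E : rel T) (S : {set T}) : bool :=
  [forall x, forall y, E x y ==> (x \in S) || (y \in S)] &&
  [forall x, exists y, (y \in S) && E x y].

(* Minimum size of a total vertex cover (#|T|.+1 standing for +infinity
   if none exists). *)
Definition tvc (E : rel T) : nat :=
  \big[minn/#|T|.+1]_(S : {set T} | is_tvc E S) #|S|.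
End Graphs.

(* Main.v *)
Require Import Defs.
From HB Require Import structures.
From mathcomp Require Import all_boot all_order all_algebra.
From mathcomp Require Import zify.
From Stdlib Require Import Btauto.
Import Order.TTheory GRing.Theory Num.Theory.
Set Implicit Arguments. Unset Strict Implicit. Unset Printing Implicit Defensive.

Lemma addbX a b : a (+) b = xorb a b. Proof. by case: a; case: b. Qed.
Ltac bt := rewrite ?addbX; btauto.

Definition bz n : {ffun 'I_n -> bool} := [ffun => false].
Definition bx n (a b : {ffun 'I_n -> bool}) : {ffun 'I_n -> bool} :=
  [ffun j => a j (+) b j].
Lemma bxA n : associative (@bx n).
Proof. by move=> a b c; apply/ffunP=> j; rewrite !ffunE addbA. Qed.
Lemma bxC n : commutative (@bx n).
Proof. by move=> a b; apply/ffunP=> j; rewrite !ffunE addbC. Qed.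
Lemma bx0 n : left_id (bz n) (@bx n).
Proof. by move=> a; apply/ffunP=> j; rewrite !ffunE. Qed.
HB.instance Definition _ n :=
  Monoid.isComLaw.Build {ffun 'I_n -> bool} (bz n) (@bx n) (@bxA n) (@bxC n) (@bx0 n).

Notation "a ⊕ b" := (bx a b) (at level 50, left associativity).
Lemma bxx n (a : {ffun 'I_n -> bool}) : a ⊕ a = bz n.
Proof. by apply/ffunP=> j; rewrite !ffunE addbb. Qed.
Lemma bx0r n (a : {ffun 'I_n -> bool}) : a ⊕ bz n = a.
Proof. by rewrite bxC bx0. Qed.
Lemma bxE n (a b : {ffun 'I_n -> bool}) j : (a ⊕ b) j = a j (+) b j.
Proof. by rewrite ffunE. Qed.
Lemma bzE n j : bz n j = false. Proof. by rewrite ffunE. Qed.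

Lemma big_xorpred (I : finType) (Z : Type) (z0 : Z) (op : Monoid.com_law z0)
  (hzz : forall z, op z z = z0) (F : I -> Z) (u v : I -> bool) :
  \big[op/z0]_(i | u i (+) v i) F i =
  op (\big[op/z0]_(i | u i) F i) (\big[op/z0]_(i | v i) F i).
Proof.
rewrite (big_mkcond (fun i => u i (+) v i)) (big_mkcond u) (big_mkcond v) -big_split.
apply: eq_bigr => i _; case: (u i); case: (v i) => /=;
  by rewrite ?Monoid.simpm ?hzz.
Qed.

Section Cons.
Variable m : nat.
Local Notation V := {ffun 'I_m -> bool}.
Local Notation vz := (bz m).
Definition dd := (2 ^ m.+1 - 1)%N.
Local Notation d := dd.
Local Notation Cube := (cube d).

Local Notation PT := {p : (bool * V)%type | p != (false, vz)}.

Lemma card_V : #|V| = (2 ^ m)%N.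
Proof. by rewrite card_ffun card_bool card_ord. Qed.

Lemma card_PT : #|{: PT}| = d.
Proof.
rewrite card_sig cardC1 card_prod card_bool card_V /dd expnS.
by rewrite subn1.
Qed.

Definition pt (i : 'I_d) : bool * V := val (enum_val (cast_ord (esym card_PT) i)).
Definition idx (q : PT) : 'I_d := cast_ord card_PT (enum_rank q).
Definition ev (i : 'I_d) : Cube := [ffun j => j == i].
Definition eps (p : bool * V) : Cube :=
  if insub p is Some q then ev (idx q) else bz d.

Lemma pt_idx q : pt (idx q) = val q.
Proof. by rewrite /pt /idx cast_ordK enum_rankK. Qed.

Lemma pt_neq0 i : pt i != (false, vz).
Proof. exact: (valP (enum_val (cast_ord (esym card_PT) i))). Qed.

Lemma eps_pt i : eps (pt i) = ev i.
Proof.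
rewrite /eps (insubT (fun p => p != (false, vz)) (pt_neq0 i)) /=.
congr ev; rewrite /idx.
have -> : Sub (pt i) (pt_neq0 i) = enum_val (cast_ord (esym card_PT) i) :> PT.
  by apply: val_inj.
by rewrite enum_valK cast_ordKV.
Qed.

Lemma eps0 : eps (false, vz) = bz d.
Proof. by rewrite /eps insubF //= eqxx. Qed.

Definition sm (Z : Type) (z0 : Z) (op : Monoid.com_law z0) (f : bool * V -> Z)
  (v : Cube) := \big[op/z0]_(i | v i) f (pt i).

Lemma sm_add (Z : Type) (z0 : Z) (op : Monoid.com_law z0) (hzz : forall z, op z z = z0) f (u v : Cube) :
  sm op f (u ⊕ v) = op (sm op f u) (sm op f v).
Proof.
rewrite /sm -big_xorpred //; apply: eq_bigl => i; by rewrite bxE.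
Qed.

Lemma sm_eps (Z : Type) (z0 : Z) (op : Monoid.com_law z0) f (hf : f (false, vz) = z0) p :
  sm op f (eps p) = f p.
Proof.
rewrite /sm /eps; case: insubP => [q _ <-|].
  rewrite (big_pred1 (idx q)) ?pt_idx // => i; by rewrite ffunE.
rewrite negbK => /eqP ->; rewrite big_pred0 // => i; by rewrite ffunE.
Qed.

Lemma sm_z (Z : Type) (z0 : Z) (op : Monoid.com_law z0) f : sm op f (bz d) = z0.
Proof. by rewrite /sm big_pred0 // => i; rewrite ffunE. Qed.

Definition nA := sm addb (fun p => p.1).
Definition Xs := sm (@bx m) (fun p => if p.1 then vz else p.2).
Definition Ys := sm (@bx m) (fun p => if p.1 then p.2 else vz).

Lemma nA_add u v : nA (u ⊕ v) = nA u (+) nA v.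
Proof. by apply: sm_add => -[]. Qed.
Lemma Xs_add u v : Xs (u ⊕ v) = Xs u ⊕ Xs v.
Proof. by apply: sm_add => z; apply: bxx. Qed.
Lemma Ys_add u v : Ys (u ⊕ v) = Ys u ⊕ Ys v.
Proof. by apply: sm_add => z; apply: bxx. Qed.
Lemma nA_eps b y : nA (eps (b, y)) = b. Proof. by rewrite /nA sm_eps. Qed.
Lemma Xs_eps b y : Xs (eps (b, y)) = if b then vz else y. Proof. by rewrite /Xs sm_eps. Qed.
Lemma Ys_eps b y : Ys (eps (b, y)) = if b then y else vz. Proof. by rewrite /Ys sm_eps. Qed.
Lemma nA_z : nA (bz d) = false. Proof. exact: sm_z. Qed.
Lemma Xs_z : Xs (bz d) = vz. Proof. exact: sm_z. Qed.
Lemma Ys_z : Ys (bz d) = vz. Proof. exact: sm_z. Qed.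


Lemma vext (a b : V) : (forall j, a j = b j) -> a = b.
Proof. by move=> h; apply/ffunP. Qed.
Ltac vt := rewrite ?bx0r ?bx0; apply: vext => ?; rewrite ?bxE ?bzE; bt.

Definition evm (i : 'I_m) : V := [ffun j => j == i].

Variable M : V -> V.
Hypothesis M_add : forall a b, M (a ⊕ b) = M a ⊕ M b.
Hypothesis M_inj : injective M.
Hypothesis M_shift : forall (i : 'I_m) (h : (i.+1 < m)%N), M (evm i) = evm (Ordinal h).

Lemma M0 : M vz = vz.
Proof. by have := M_add vz vz; rewrite bxx => h; rewrite h bxx. Qed.

Definition Minv := invF M_inj.
Lemma MinvK : cancel Minv M.
Proof. exact: f_invF. Qed.

Lemma bx_eq0 (a b : V) : (a ⊕ b == vz) = (a == b).
Proof.
apply/eqP/eqP => [h|->]; last exact: bxx.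
by rewrite -[b]bx0 -(bxx a) -bxA h bx0r.
Qed.

Definition C : {set Cube} := [set v | ~~ nA v && (Xs v == Ys v)].
Definition D : {set Cube} := [set v | nA v && (Xs v == M (Ys v))].
Definition S : {set Cube} := C :|: D.
Definition Hrel : rel Cube := fun u v => cube_adj u v && ((u \in S) || (v \in S)).
Definition HA (A : {set Cube}) : rel Cube := [rel a b | [&& Hrel a b, a \in A & b \in A]].

Lemma inC v : (v \in C) = ~~ nA v && (Xs v == Ys v). Proof. by rewrite inE. Qed.
Lemma inD v : (v \in D) = nA v && (Xs v == M (Ys v)). Proof. by rewrite inE. Qed.
Lemma CS v : v \in C -> v \in S. Proof. by move=> h; rewrite /S inE h. Qed.
Lemma DS v : v \in D -> v \in S. Proof. by move=> h; rewrite /S inE h orbT. Qed.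
Lemma CnD v : v \in C -> v \notin D.
Proof. by rewrite inC inD => /andP[/negbTE ->]. Qed.

Definition eA y := eps (true, y).
Definition eW x := eps (false, x).
Definition dn v y := v ⊕ eA y ⊕ eW (Xs v ⊕ M (Ys v ⊕ y)).
Definition up v z := v ⊕ eA z ⊕ eW (Xs v ⊕ Ys v ⊕ z).

Lemma nA_dn v y : nA (dn v y) = ~~ nA v.
Proof. by rewrite /dn !nA_add !nA_eps addbT addbF. Qed.
Lemma Xs_dn v y : Xs (dn v y) = M (Ys v ⊕ y).
Proof. rewrite /dn !Xs_add !Xs_eps /=; vt. Qed.
Lemma Ys_dn v y : Ys (dn v y) = Ys v ⊕ y.
Proof. rewrite /dn !Ys_add !Ys_eps /=; vt. Qed.
Lemma nA_up v y : nA (up v y) = ~~ nA v.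
Proof. by rewrite /up !nA_add !nA_eps addbT addbF. Qed.
Lemma Xs_up v y : Xs (up v y) = Xs v ⊕ Ys v ⊕ y ⊕ Xs v.
Proof. rewrite /up !Xs_add !Xs_eps /=; vt. Qed.
Lemma Ys_up v y : Ys (up v y) = Ys v ⊕ y.
Proof. rewrite /up !Ys_add !Ys_eps /=; vt. Qed.

Lemma dn_D v y : ~~ nA v -> dn v y \in D.
Proof. by move=> h; rewrite inD nA_dn h Xs_dn Ys_dn eqxx. Qed.
Lemma up_C v y : nA v -> up v y \in C.
Proof. move=> h; rewrite inC nA_up h Xs_up Ys_up /=; apply/eqP; vt. Qed.

Lemma cext (a b : Cube) : (forall j, a j = b j) -> a = b.
Proof. by move=> h; apply/ffunP. Qed.
Ltac ct := apply: cext => ?; rewrite ?bxE ?bzE; bt.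

Lemma adj_ev (u : Cube) i : cube_adj u (u ⊕ ev i).
Proof.
rewrite /cube_adj; apply/eqP.
have -> : [set j | u j != (u ⊕ ev i) j] = [set i].
  by apply/setP => j; rewrite !inE bxE ffunE; case: (u j); case: (j == i).
exact: cards1.
Qed.

Lemma adjP (u v : Cube) : cube_adj u v -> exists i, v = u ⊕ ev i.
Proof.
rewrite /cube_adj => /cards1P [i hi]; exists i; apply: cext => j.
rewrite bxE ffunE; move/setP: hi => /(_ j); rewrite !inE.
by case: (j == i); case: (u j); case: (v j).
Qed.

Lemma adj_irr (u : Cube) : ~~ cube_adj u u.
Proof.
rewrite /cube_adj; suff -> : [set j | u j != u j] = set0 by rewrite cards0.
by apply/setP => j; rewrite !inE eqxx.
Qed.

Lemma adj_sym : symmetric (@cube_adj d).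
Proof.
move=> u v; rewrite /cube_adj; congr (_ == _); apply: eq_card => j.
by rewrite !inE eq_sym.
Qed.

Lemma Hrel_sym : symmetric Hrel.
Proof. by move=> u v; rewrite /Hrel adj_sym orbC. Qed.

Lemma Hrel_irr u : ~~ Hrel u u.
Proof. by rewrite /Hrel (negbTE (adj_irr u)). Qed.

Lemma eps_nz p : p != (false, vz) -> exists i, eps p = ev i.
Proof.
by move=> h; rewrite /eps (insubT (fun p => p != (false, vz)) h); eexists.
Qed.

Lemma eps_inj p q : p != (false, vz) -> eps p = eps q -> p = q.
Proof.
move=> hp; rewrite /eps (insubT (fun p => p != (false, vz)) hp).
case: insubP => [q' _ <-|].
  move=> /ffunP /(_ (idx (Sub p hp))); rewrite !ffunE eqxx => /esym /eqP h.
  by move: (pt_idx (Sub p hp)); rewrite h pt_idx /= => ->.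
by move=> _ /ffunP /(_ (idx (Sub p hp))); rewrite !ffunE eqxx.
Qed.

Definition goodA (A : {set Cube}) := forall a b, a != b -> (a \in A) || (b \in A).

Lemma step_eps (A : {set Cube}) (u : Cube) p : p != (false, vz) -> u \in A -> u ⊕ eps p \in A ->
  (u \in S) || (u ⊕ eps p \in S) -> connect (HA A) u (u ⊕ eps p).
Proof.
move=> /eps_nz [i ->] hu hv hs; apply: connect1.
by rewrite /HA /Hrel /= adj_ev hs hu hv.
Qed.

Lemma step2 (A : {set Cube}) (hA : goodA A) (u : Cube) p q : p.1 != q.1 ->
  u \in S -> u ⊕ eps p ⊕ eps q \in S -> u \in A -> u ⊕ eps p ⊕ eps q \in A ->
  connect (HA A) u (u ⊕ eps p ⊕ eps q).
Proof.
move=> hpq huS hvS huA hvA.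
have [p0|pn0] := eqVneq p (false, vz).
  have qn0 : q != (false, vz) by apply/negP => /eqP q0; move: hpq; rewrite p0 q0.
  move: hvS hvA; rewrite p0 eps0 bx0r => hvS hvA.
  by apply: step_eps; rewrite ?huS.
have [q0|qn0] := eqVneq q (false, vz).
  move: hvS hvA; rewrite q0 eps0 bx0r => hvS hvA.
  by apply: step_eps; rewrite ?huS.
have hne : u ⊕ eps p != u ⊕ eps q.
  apply/negP => /eqP h; have : eps p = eps q.
    by rewrite -[eps p]bx0 -(bxx u) -bxA h bxA bxx bx0.
  by move/(eps_inj pn0) => e; move: hpq; rewrite e eqxx.
case/orP: (hA _ _ hne) => hm.
  apply: (connect_trans (y := u ⊕ eps p)); first by apply: step_eps; rewrite ?huS.
  by apply: step_eps; rewrite ?hvS ?orbT.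
apply: (connect_trans (y := u ⊕ eps q)); first by apply: step_eps; rewrite ?huS.
have -> : u ⊕ eps p ⊕ eps q = u ⊕ eps q ⊕ eps p by rewrite -!bxA (bxC (eps p)).
have e : u ⊕ eps p ⊕ eps q = u ⊕ eps q ⊕ eps p by rewrite -!bxA (bxC (eps p)).
rewrite e in hvS hvA *; by apply: step_eps; rewrite ?hvS ?orbT.
Qed.

Lemma conn_dn (A : {set Cube}) (hA : goodA A) c y : ~~ nA c -> c \in S -> c \in A ->
  dn c y \in A -> connect (HA A) c (dn c y).
Proof.
move=> hn hS hcA hdA; apply: step2 => //; first by apply: DS; apply: dn_D.
Qed.

Lemma conn_up (A : {set Cube}) (hA : goodA A) c y : nA c -> c \in S -> c \in A ->
  up c y \in A -> connect (HA A) c (up c y).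
Proof.
move=> hn hS hcA hdA; apply: step2 => //; first by apply: CS; apply: up_C.
Qed.

Lemma C_nb v : v \notin C -> exists2 p, p != (false, vz) & v ⊕ eps p \in C.
Proof.
rewrite inC negb_and negbK; case hn: (nA v) => /= hx.
  exists (true, Xs v ⊕ Ys v) => //.
  rewrite inC nA_add nA_eps hn Xs_add Ys_add Xs_eps Ys_eps /=; apply/eqP; vt.
exists (false, Xs v ⊕ Ys v).
  by apply: contra hx => /eqP [] /eqP; rewrite bx_eq0.
rewrite inC nA_add nA_eps hn Xs_add Ys_add Xs_eps Ys_eps /=; apply/eqP; vt.
Qed.

Lemma D_nb v : v \notin D -> exists2 p, p != (false, vz) & v ⊕ eps p \in D.
Proof.
rewrite inD negb_and; case hn: (nA v) => /= hx.
  exists (false, Xs v ⊕ M (Ys v)).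
    by apply: contra hx => /eqP [] /eqP; rewrite bx_eq0.
  rewrite inD nA_add nA_eps hn Xs_add Ys_add Xs_eps Ys_eps /=; apply/eqP; vt.
exists (true, Ys v ⊕ Minv (Xs v)) => //.
rewrite inD nA_add nA_eps hn Xs_add Ys_add Xs_eps Ys_eps /=.
have -> : Ys v ⊕ (Ys v ⊕ Minv (Xs v)) = Minv (Xs v) by vt.
by rewrite MinvK bx0r.
Qed.

Lemma S_nb v : exists2 p, p != (false, vz) & v ⊕ eps p \in S.
Proof.
case hC: (v \in C).
  have [p hp hD] := D_nb (CnD hC); exists p => //; exact: DS.
have [p hp hC'] := C_nb (negbT hC); exists p => //; exact: CS.
Qed.

Lemma ev_neq (u : Cube) i : u ⊕ ev i != u.
Proof.
apply/negP => /eqP /ffunP /(_ i); rewrite bxE ffunE eqxx.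
by case: (u i).
Qed.

Lemma loc_C w a : w \in C -> Hrel w a ->
  exists y, connect (HA [set~ w]) a (dn w y).
Proof.
move=> hw /andP [/adjP [i ->] _]; rewrite -eps_pt.
have hn : ~~ nA w by move: hw; rewrite inC => /andP [].
have hx : Xs w = Ys w by move: hw; rewrite inC => /andP [_ /eqP].
have hdw t : dn w t \in [set~ w].
  rewrite !inE; apply/negP => /eqP h; have := CnD hw; by rewrite -h dn_D.
have := ev_neq w i; rewrite -eps_pt.
have hnz := pt_neq0 i; case: (pt i) hnz => [[] t] hnz hai.
  exists t; rewrite /dn -/(eA t).
  have [x0|xn0] := eqVneq (Xs w ⊕ M (Ys w ⊕ t)) vz.
    by rewrite x0 /eW eps0 bx0r.
  apply: step_eps; [done | by rewrite !inE hai | exact: hdw |].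
  by rewrite (DS (dn_D _ hn)) orbT.
exists (Ys w ⊕ Minv (Ys w ⊕ t)); rewrite /dn.
have -> : Ys w ⊕ (Ys w ⊕ Minv (Ys w ⊕ t)) = Minv (Ys w ⊕ t) by vt.
rewrite MinvK hx.
have -> : Ys w ⊕ (Ys w ⊕ t) = t by vt.
have -> : w ⊕ eA (Ys w ⊕ Minv (Ys w ⊕ t)) ⊕ eW t =
          w ⊕ eps (false, t) ⊕ eps (true, Ys w ⊕ Minv (Ys w ⊕ t)).
  by rewrite /eA /eW -!bxA (bxC (eps (true, _))).
apply: step_eps => //; first by rewrite !inE hai.
  have := hdw (Ys w ⊕ Minv (Ys w ⊕ t)); rewrite /dn.
  have -> : Ys w ⊕ (Ys w ⊕ Minv (Ys w ⊕ t)) = Minv (Ys w ⊕ t) by vt.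
  rewrite MinvK hx.
  have -> : Ys w ⊕ (Ys w ⊕ t) = t by vt.
  by rewrite /eA /eW -!bxA (bxC (eps (true, _))).
have := DS (dn_D (Ys w ⊕ Minv (Ys w ⊕ t)) hn); rewrite /dn.
have -> : Ys w ⊕ (Ys w ⊕ Minv (Ys w ⊕ t)) = Minv (Ys w ⊕ t) by vt.
rewrite MinvK hx.
have -> : Ys w ⊕ (Ys w ⊕ t) = t by vt.
by rewrite /eA /eW -!bxA (bxC (eps (true, _))) => ->; rewrite orbT.
Qed.

Lemma DnC v w : w \in D -> v \in C -> v != w.
Proof. by move=> hw hv; apply/negP => /eqP e; move: (CnD hv); rewrite e hw. Qed.

Lemma loc_D w a : w \in D -> Hrel w a ->
  exists z, connect (HA [set~ w]) a (up w z).
Proof.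
move=> hw /andP [/adjP [i ->] _]; rewrite -eps_pt.
have hn : nA w by move: hw; rewrite inD => /andP [].
have huw t : up w t \in [set~ w] by rewrite !inE; apply: DnC => //; apply: up_C.
have huS t : up w t \in S by apply: CS; apply: up_C.
have := ev_neq w i; rewrite -eps_pt.
have hnz := pt_neq0 i; case: (pt i) hnz => [[] t] hnz hai.
  exists t; rewrite /up -/(eA t).
  have [x0|xn0] := eqVneq (Xs w ⊕ Ys w ⊕ t) vz.
    by rewrite x0 /eW eps0 bx0r.
  apply: step_eps; [done | by rewrite !inE hai | exact: huw |].
  by have := huS t; rewrite /up => ->; rewrite orbT.
exists (Xs w ⊕ Ys w ⊕ t).
have e : up w (Xs w ⊕ Ys w ⊕ t) = w ⊕ eps (false, t) ⊕ eps (true, Xs w ⊕ Ys w ⊕ t).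
  rewrite /up.
  have -> : Xs w ⊕ Ys w ⊕ (Xs w ⊕ Ys w ⊕ t) = t by vt.
  by rewrite /eA /eW -!bxA (bxC (eps (true, _))).
rewrite e; apply: step_eps; [done | by rewrite !inE hai | by rewrite -e | ].
by rewrite -e huS orbT.
Qed.

Definition mv c y z := up (dn c y) z.
Definition mvD c z y := dn (up c z) y.

Lemma mv_C c y z : c \in C -> mv c y z \in C.
Proof. by rewrite inC => /andP [h _]; apply: up_C; rewrite nA_dn. Qed.
Lemma mvD_D c y z : c \in D -> mvD c z y \in D.
Proof. by rewrite inD => /andP [h _]; apply: dn_D; rewrite nA_up h. Qed.
Lemma Ys_mv c y z : Ys (mv c y z) = Ys c ⊕ y ⊕ z.
Proof. by rewrite /mv Ys_up Ys_dn. Qed.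
Lemma Ys_mvD c y z : Ys (mvD c z y) = Ys c ⊕ z ⊕ y.
Proof. by rewrite /mvD Ys_dn Ys_up. Qed.

Lemma mv_eq c y z : c \in C -> mv c y z =
  c ⊕ eA y ⊕ eA z ⊕ eW (Ys c ⊕ M (Ys c ⊕ y)) ⊕ eW (Ys c ⊕ M (Ys c ⊕ y) ⊕ y ⊕ z).
Proof.
rewrite inC => /andP [_ /eqP hx].
rewrite /mv /up Xs_dn Ys_dn /dn hx.
have -> : M (Ys c ⊕ y) ⊕ (Ys c ⊕ y) ⊕ z = Ys c ⊕ M (Ys c ⊕ y) ⊕ y ⊕ z by vt.
ct.
Qed.

Lemma mvD_eq c y z : c \in D -> mvD c z y =
  c ⊕ eA z ⊕ eA y ⊕ eW (M (Ys c) ⊕ Ys c ⊕ z) ⊕ eW (Ys c ⊕ z ⊕ M (Ys c ⊕ z ⊕ y)).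
Proof.
rewrite inD => /andP [_ /eqP hx].
rewrite /mvD /dn Xs_up Ys_up /up hx.
have -> : M (Ys c) ⊕ Ys c ⊕ z ⊕ M (Ys c) = Ys c ⊕ z by vt.
ct.
Qed.

Lemma pt_inj : injective pt.
Proof. by move=> i j /val_inj /enum_val_inj /cast_ord_inj. Qed.

Lemma epsE p i : eps p i = (pt i == p).
Proof.
rewrite /eps; case: insubP => [q _ <-|].
  rewrite ffunE; apply/eqP/eqP => [->|h]; first by rewrite pt_idx.
  by apply: pt_inj; rewrite pt_idx.
rewrite negbK => /eqP ->; rewrite ffunE; apply/esym/negbTE; exact: pt_neq0.
Qed.

Lemma goodC1 w : goodA [set~ w].
Proof.
move=> a b hab; rewrite !inE; case: (eqVneq a w) => [ea|] //=.
by rewrite -ea eq_sym.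
Qed.

Lemma HA_sym (A : {set Cube}) : symmetric (HA A).
Proof. by move=> a b; rewrite /HA /= Hrel_sym; case: (a \in A); case: (b \in A); rewrite ?andbF. Qed.

Lemma M_neq0 u : u != vz -> M u != vz.
Proof. by apply: contra => /eqP h; apply/eqP; apply: M_inj; rewrite h M0. Qed.

Lemma bx_neq (a u : V) : u != vz -> a ⊕ u != a.
Proof.
apply: contra => /eqP h; have e : u = a ⊕ (a ⊕ u) by vt.
by rewrite e h bxx.
Qed.

Definition hNt := forall u, u ⊕ M u = vz -> u = vz.

Lemma sqC (N_inj : hNt) c y y' : c \in C -> y != y' -> connect (HA [set~ c]) (dn c y) (dn c y').
Proof.
move=> hc hyy.
have hn : ~~ nA c by move: hc; rewrite inC => /andP [].
set u := M (y ⊕ y').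
have hu : u != vz by apply: M_neq0; rewrite bx_eq0.
set z := y ⊕ u; set z' := y' ⊕ u.
have hdS t : dn c t \in S by apply: DS; apply: dn_D.
have hdA t : dn c t \in [set~ c] by rewrite !inE eq_sym; exact: (DnC (dn_D t hn) hc).
have hC1 : mv c y z \in C by apply: mv_C.
have hC2 : mv c y' z' \in C by apply: mv_C.
have hyz : y ⊕ z = u by rewrite /z; vt.
have hyz' : y' ⊕ z' = u by rewrite /z'; vt.
have hne1 : mv c y z != c.
  apply/negP => /eqP h; have := congr1 Ys h; rewrite Ys_mv -bxA hyz => /eqP.
  by rewrite (negbTE (bx_neq _ hu)).
have e : mv (mv c y z) y' z' = mv (mv c y' z') y z.
  rewrite (mv_eq _ _ hC1) (mv_eq _ _ hC2) !Ys_mv (mv_eq _ _ hc) (mv_eq _ _ hc).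
  set Y := Ys c.
  have E4 : Y ⊕ y ⊕ z ⊕ M (Y ⊕ y ⊕ z ⊕ y') ⊕ y' ⊕ z' = Y ⊕ y' ⊕ z' ⊕ M (Y ⊕ y' ⊕ z' ⊕ y).
    by rewrite /z /z' /u !M_add; vt.
  have E3 : Y ⊕ y ⊕ z ⊕ M (Y ⊕ y ⊕ z ⊕ y') = Y ⊕ y' ⊕ z' ⊕ M (Y ⊕ y' ⊕ z' ⊕ y) ⊕ y ⊕ z.
    by rewrite /z /z' /u !M_add; vt.
  have E1 : Y ⊕ M (Y ⊕ y) ⊕ y ⊕ z = Y ⊕ M (Y ⊕ y').
    by rewrite /z /z' /u !M_add; vt.
  have E2 : Y ⊕ M (Y ⊕ y') ⊕ y' ⊕ z' = Y ⊕ M (Y ⊕ y).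
    by rewrite /z /z' /u !M_add; vt.
  rewrite E4 E3 E1 E2; ct.
have hne2 : mv c y' z' != c.
  apply/negP => /eqP h; have := congr1 Ys h; rewrite Ys_mv -bxA hyz' => /eqP.
  by rewrite (negbTE (bx_neq _ hu)).
have hne12 : mv (mv c y z) y' z' != c.
  pose q := Sub (true, y) isT : {p : (bool * V)%type | p != (false, vz)}.
  apply/negP => /eqP /ffunP /(_ (idx q)).
  rewrite (mv_eq _ _ hC1) (mv_eq _ _ hc) !bxE !epsE pt_idx /= !xpair_eqE /= eqxx.
  have -> : (y == z) = false by apply/negbTE; rewrite /z eq_sym; exact: bx_neq.
  have -> : (y == y') = false by apply/negbTE.
  have -> : (y == z') = false.
    apply/negbTE/negP => /eqP h.
    have ee : (y ⊕ y') ⊕ M (y ⊕ y') = y ⊕ z' by rewrite /z' /u; vt.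
    rewrite -h bxx in ee; move: (N_inj _ ee) => /eqP; rewrite bx_eq0.
    by rewrite (negbTE hyy).
  by case: (c (idx q)).
have hDA v : v \in D -> v \in [set~ c] by move=> hv; rewrite !inE eq_sym; exact: DnC.
have hnd v : v \in C -> nA (dn v y') && nA (dn v y) by rewrite inC nA_dn nA_dn => /andP [-> _].
have path1 a b a' b' : a != b -> mv c a b != c -> mv (mv c a b) a' b' != c ->
    connect (HA [set~ c]) (dn c a) (mv (mv c a b) a' b').
  move=> hab h1 h2.
  have hc1 : mv c a b \in C by apply: mv_C.
  apply: (connect_trans (y := mv c a b)).
    apply: conn_up; [exact: goodC1 | by rewrite nA_dn hn | exact: hdS | exact: hdA | by rewrite !inE].
  apply: (connect_trans (y := dn (mv c a b) a')).
    apply: conn_dn; [exact: goodC1 | by move: hc1; rewrite inC => /andP [] | exact: CS | by rewrite !inE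
      | apply: hDA; apply: dn_D; by move: hc1; rewrite inC => /andP []].
  apply: conn_up; [exact: goodC1 | by move: hc1; rewrite inC nA_dn => /andP [] | 
     by apply: DS; apply: dn_D; move: hc1; rewrite inC => /andP [] |
     by apply: hDA; apply: dn_D; move: hc1; rewrite inC => /andP [] | by rewrite !inE].
have := path1 _ _ y' z' _ hne1 hne12; rewrite e => p1.
have hne21 : mv (mv c y' z') y z != c by rewrite -e.
have p2 := path1 y' z' y z _ hne2 hne21.
apply: (connect_trans (p1 _)).
  by rewrite /z eq_sym; apply: bx_neq.
rewrite (sym_connect_sym (@HA_sym _)).

by apply: p2; rewrite /z' eq_sym; apply: bx_neq.
Qed.

Definition Nf u := u ⊕ M u.
Lemma Nf_inj (N_inj : hNt) : injective Nf.
Proof.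
move=> a b h; have lin : Nf (a ⊕ b) = Nf a ⊕ Nf b by rewrite /Nf M_add; vt.
have e : Nf (a ⊕ b) = vz by rewrite lin h bxx.
by apply/eqP; rewrite -bx_eq0; apply/eqP; apply: N_inj.
Qed.
Lemma sqD (N_inj : hNt) c z z' : c \in D -> z != z' -> connect (HA [set~ c]) (up c z) (up c z').
Proof.
move=> hc hzz.
pose Ninv := invF (Nf_inj N_inj).
have NinvK : cancel Ninv Nf by exact: f_invF.
have hn : nA c by move: hc; rewrite inD => /andP [].
set u := Ninv (z ⊕ z').
have hu : u ⊕ M u = z ⊕ z' by have := NinvK (z ⊕ z').
have hMu : M u = u ⊕ (z ⊕ z') by rewrite -hu; vt.
have hu0 : u != vz.
  apply: contra hzz => /eqP h0; move: hu; rewrite h0 M0 bxx => /esym /eqP.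
  by rewrite bx_eq0.
set y := z ⊕ u; set y' := z' ⊕ u.
have hD1 : mvD c z y \in D by apply: mvD_D.
have hD2 : mvD c z' y' \in D by apply: mvD_D.
have e : mvD (mvD c z y) z' y' = mvD (mvD c z' y') z y.
  rewrite (mvD_eq _ _ hD1) (mvD_eq _ _ hD2) !Ys_mvD (mvD_eq _ _ hc) (mvD_eq _ _ hc).
  set Y := Ys c.
  have Ea : M (Y ⊕ z ⊕ y) ⊕ (Y ⊕ z ⊕ y) ⊕ z' = M Y ⊕ Y ⊕ z.
    by rewrite /y !M_add hMu; vt.
  have Eb : Y ⊕ z ⊕ y ⊕ z' ⊕ M (Y ⊕ z ⊕ y ⊕ z' ⊕ y') = Y ⊕ z ⊕ M (Y ⊕ z ⊕ y).
    by rewrite /y /y' !M_add hMu; vt.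
  have Ea' : M (Y ⊕ z' ⊕ y') ⊕ (Y ⊕ z' ⊕ y') ⊕ z = M Y ⊕ Y ⊕ z'.
    by rewrite /y' !M_add hMu; vt.
  have Eb' : Y ⊕ z' ⊕ y' ⊕ z ⊕ M (Y ⊕ z' ⊕ y' ⊕ z ⊕ y) = Y ⊕ z' ⊕ M (Y ⊕ z' ⊕ y').
    by rewrite /y /y' !M_add hMu; vt.
  rewrite Ea Eb Ea' Eb'; ct.
have hne1 : mvD c z y != c.
  apply/negP => /eqP h; have := congr1 Ys h; rewrite Ys_mvD.
  have -> : Ys c ⊕ z ⊕ y = Ys c ⊕ u by rewrite /y; vt.
  by move/eqP; rewrite (negbTE (bx_neq _ hu0)).
have hne2 : mvD c z' y' != c.
  apply/negP => /eqP h; have := congr1 Ys h; rewrite Ys_mvD.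
  have -> : Ys c ⊕ z' ⊕ y' = Ys c ⊕ u by rewrite /y'; vt.
  by move/eqP; rewrite (negbTE (bx_neq _ hu0)).
have hne12 : mvD (mvD c z y) z' y' != c.
  pose q := Sub (true, z) isT : {p : (bool * V)%type | p != (false, vz)}.
  apply/negP => /eqP /ffunP /(_ (idx q)).
  rewrite (mvD_eq _ _ hD1) (mvD_eq _ _ hc) !bxE !epsE pt_idx /= !xpair_eqE /= eqxx.
  have -> : (z == y) = false by apply/negbTE; rewrite /y eq_sym; exact: bx_neq.
  have -> : (z == z') = false by apply/negbTE.
  have -> : (z == y') = false.
    apply/negbTE/negP => /eqP h.
    have ee : z ⊕ z' ⊕ u = z ⊕ y' by rewrite /y'; vt.
    rewrite -h bxx -hu in ee.
    have : M u = vz by rewrite -ee; vt.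
    move=> /eqP; rewrite -M0 => /eqP /M_inj /eqP; by rewrite (negbTE hu0).
  by case: (c (idx q)).
have hCA v : v \in C -> v \in [set~ c] by move=> hv; rewrite !inE; exact: DnC.
have path1 a b a' b' : a != b -> mvD c a b != c -> mvD (mvD c a b) a' b' != c ->
    connect (HA [set~ c]) (up c a) (mvD (mvD c a b) a' b').
  move=> hab h1 h2.
  have hd1 : mvD c a b \in D by apply: mvD_D.
  have hn1 : nA (mvD c a b) by move: hd1; rewrite inD => /andP [].
  have hcu : up c a \in C by apply: up_C.
  apply: (connect_trans (y := mvD c a b)).
    apply: conn_dn; [exact: goodC1 | by rewrite nA_up hn | exact: CS | exact: hCA
      | by rewrite !inE].
  apply: (connect_trans (y := up (mvD c a b) a')).
    apply: conn_up; [exact: goodC1 | exact: hn1 | exact: DS | by rewrite !inE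
      | apply: hCA; exact: up_C].
  apply: conn_dn; [exact: goodC1 | by rewrite nA_up hn1 |
     by apply: CS; apply: up_C | by apply: hCA; apply: up_C | by rewrite !inE].
have hne21 : mvD (mvD c z' y') z y != c by rewrite -e.
have p1 := path1 z y z' y' _ hne1 hne12.
have p2 := path1 z' y' z y _ hne2 hne21.
rewrite e in p1.
apply: (connect_trans (p1 _)).
  by rewrite /y eq_sym; apply: bx_neq.
rewrite (sym_connect_sym (@HA_sym _)).
by apply: p2; rewrite /y' eq_sym; apply: bx_neq.
Qed.

Lemma sqC_id (hI : forall y, M y = y) c y y' : c \in C -> y != y' ->
  connect (HA [set~ c]) (dn c y) (dn c y').
Proof.
move=> hc hyy.
have hn : ~~ nA c by move: hc; rewrite inC => /andP [].
have hx : Xs c = Ys c by move: hc; rewrite inC => /andP [_ /eqP].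
have hc1 : mv c y y' \in C by apply: mv_C.
have hx1 : Xs (mv c y y') = Ys (mv c y y') by move: hc1; rewrite inC => /andP [_ /eqP].
have hn1 : ~~ nA (mv c y y') by move: hc1; rewrite inC => /andP [].
have e : dn (mv c y y') y = dn c y'.
  rewrite /dn hx1 Ys_mv hx !hI (mv_eq _ _ hc) !hI.
  rewrite (_ : Ys c ⊕ (Ys c ⊕ y) = y); last by vt.
  rewrite (_ : Ys c ⊕ y ⊕ y' ⊕ (Ys c ⊕ y ⊕ y' ⊕ y) = y); last by vt.
  rewrite (_ : Ys c ⊕ (Ys c ⊕ y') = y'); last by vt.
  rewrite (_ : y ⊕ y ⊕ y' = y'); last by vt.
  ct.
have hne : mv c y y' != c.
  apply/negP => /eqP h; have := congr1 Ys h; rewrite Ys_mv -bxA => /eqP.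
  by rewrite (negbTE (bx_neq _ _)) // bx_eq0.
apply: (connect_trans (y := mv c y y')).
  apply: conn_up; [exact: goodC1 | by rewrite nA_dn hn | apply: DS; exact: dn_D
    | by rewrite !inE eq_sym; apply: DnC => //; exact: dn_D | by rewrite !inE].
rewrite -e; apply: conn_dn; [exact: goodC1 | exact: hn1 | exact: CS | by rewrite !inE
    | by rewrite !inE eq_sym; apply: DnC => //; exact: dn_D].
Qed.

Lemma sqD_id (hI : forall y, M y = y) c z z' : c \in D -> z != z' ->
  connect (HA [set~ c]) (up c z) (up c z').
Proof.
move=> hc hzz.
have hn : nA c by move: hc; rewrite inD => /andP [].
have hx : Xs c = Ys c by move: hc; rewrite inD hI => /andP [_ /eqP].
have hc1 : mvD c z z' \in D by apply: mvD_D.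
have hx1 : Xs (mvD c z z') = Ys (mvD c z z') by move: hc1; rewrite inD hI => /andP [_ /eqP].
have hn1 : nA (mvD c z z') by move: hc1; rewrite inD => /andP [].
have e : up (mvD c z z') z = up c z'.
  rewrite /up hx1 Ys_mvD hx (mvD_eq _ _ hc) !hI.
  rewrite (_ : Ys c ⊕ Ys c ⊕ z = z); last by vt.
  rewrite (_ : Ys c ⊕ z ⊕ (Ys c ⊕ z ⊕ z') = z'); last by vt.
  rewrite (_ : Ys c ⊕ z ⊕ z' ⊕ (Ys c ⊕ z ⊕ z') ⊕ z = z); last by vt.
  rewrite (_ : Ys c ⊕ Ys c ⊕ z' = z'); last by vt.
  ct.
have hne : mvD c z z' != c.
  apply/negP => /eqP h; have := congr1 Ys h; rewrite Ys_mvD -bxA => /eqP.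
  by rewrite (negbTE (bx_neq _ _)) // bx_eq0.
apply: (connect_trans (y := mvD c z z')).
  apply: conn_dn; [exact: goodC1 | by rewrite nA_up hn | apply: CS; exact: up_C
    | by rewrite !inE; apply: DnC => //; exact: up_C | by rewrite !inE].
rewrite -e; apply: conn_up; [exact: goodC1 | exact: hn1 | exact: DS | by rewrite !inE
    | by rewrite !inE; apply: DnC => //; exact: up_C].
Qed.

Variable hsq : hNt \/ (forall y, M y = y).

Lemma loc_all w a b : Hrel w a -> Hrel w b -> connect (HA [set~ w]) a b.
Proof.
move=> ha hb.
have csym := sym_connect_sym (@HA_sym [set~ w]).
case hwC: (w \in C).
  have [ya pa] := loc_C hwC ha; have [yb pb] := loc_C hwC hb.
  apply: (connect_trans pa); rewrite csym; apply: (connect_trans pb).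
  have [->|hne] := eqVneq yb ya; first exact: connect0.
  by case: hsq => h; [exact: sqC | exact: sqC_id].
case hwD: (w \in D).
  have [ya pa] := loc_D hwD ha; have [yb pb] := loc_D hwD hb.
  apply: (connect_trans pa); rewrite csym; apply: (connect_trans pb).
  have [->|hne] := eqVneq yb ya; first exact: connect0.
  by case: hsq => h; [exact: sqD | exact: sqD_id].
have hwS : w \notin S by rewrite /S inE hwC hwD.
move: ha hb; rewrite /Hrel (negbTE hwS) /= => /andP [/adjP [i ->] haS] /andP [/adjP [j ->] hbS].
have [->|hij] := eqVneq i j; first exact: connect0.
have hm : w ⊕ ev i ⊕ ev j != w.
  apply/negP => /eqP /ffunP /(_ i); rewrite !bxE !ffunE eqxx (negbTE hij).
  by case: (w i).
apply: (connect_trans (y := w ⊕ ev i ⊕ ev j)); apply: connect1.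
  by rewrite /HA /Hrel /= adj_ev haS !inE hm ev_neq.
have e2 : w ⊕ ev i ⊕ ev j = w ⊕ ev j ⊕ ev i by rewrite -!bxA (bxC (ev i)).
rewrite e2 in hm *.
by rewrite /HA /Hrel /= adj_sym adj_ev hbS orbT !inE hm ev_neq.
Qed.

Local Notation conn := (connect (HA setT)).

Lemma goodT : goodA setT. Proof. by move=> a b _; rewrite !inE. Qed.

Lemma conn_mv c y z : c \in C -> conn c (mv c y z).
Proof.
move=> hc; have hn : ~~ nA c by move: hc; rewrite inC => /andP [].
apply: (connect_trans (y := dn c y)).
  apply: conn_dn; [exact: goodT | exact: hn | exact: CS | by rewrite inE | by rewrite inE].
apply: conn_up; [exact: goodT | by rewrite nA_dn | apply: DS; exact: dn_D
  | by rewrite inE | by rewrite inE].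
Qed.

Definition Eg g := [/\ nA g = false, Xs g = Ys g & forall c, c \in C -> conn c (c ⊕ g)].

Lemma C_add c g : c \in C -> nA g = false -> Xs g = Ys g -> c ⊕ g \in C.
Proof.
rewrite !inC nA_add Xs_add Ys_add => /andP [hn /eqP hx] -> ->.
by rewrite addbF hn hx eqxx.
Qed.

Lemma Eg_z : Eg (bz d).
Proof. by split; rewrite ?nA_z ?Xs_z ?Ys_z // => c _; rewrite bx0r. Qed.

Lemma Eg_add g h : Eg g -> Eg h -> Eg (g ⊕ h).
Proof.
move=> [g1 g2 g3] [h1 h2 h3]; split.
- by rewrite nA_add g1 h1.
- by rewrite Xs_add Ys_add g2 h2.
move=> c hc; apply: (connect_trans (g3 _ hc)); rewrite bxA; apply: h3.
exact: C_add.
Qed.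

Definition Q p a b := eW p ⊕ eW (p ⊕ a) ⊕ eW (p ⊕ b) ⊕ eW (p ⊕ a ⊕ b).

Lemma nA_eW x : nA (eW x) = false. Proof. exact: nA_eps. Qed.
Lemma Xs_eW x : Xs (eW x) = x. Proof. exact: Xs_eps. Qed.
Lemma Ys_eW x : Ys (eW x) = vz. Proof. exact: Ys_eps. Qed.
Lemma nA_eA x : nA (eA x) = true. Proof. exact: nA_eps. Qed.
Lemma Xs_eA x : Xs (eA x) = vz. Proof. exact: Xs_eps. Qed.
Lemma Ys_eA x : Ys (eA x) = x. Proof. exact: Ys_eps. Qed.

Lemma nA_Q p a b : nA (Q p a b) = false.
Proof. by rewrite /Q !nA_add !nA_eW. Qed.
Lemma XY_Q p a b : Xs (Q p a b) = Ys (Q p a b).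
Proof. rewrite /Q !Xs_add !Ys_add !Xs_eW !Ys_eW; vt. Qed.

Lemma EQ p u : Eg (Q p u (M u)).
Proof.
split; [exact: nA_Q | exact: XY_Q |] => c hc.
set Y := Ys c.
set y := Y ⊕ Minv (Y ⊕ p); set z := y ⊕ u.
have hMy : M (Y ⊕ y) = Y ⊕ p.
  by rewrite /y (_ : Y ⊕ (Y ⊕ Minv (Y ⊕ p)) = Minv (Y ⊕ p)) ?MinvK //; vt.
have hc1 : mv c y z \in C by apply: mv_C.
have -> : c ⊕ Q p u (M u) = mv (mv c y z) y z.
  rewrite (mv_eq _ _ hc1) Ys_mv (mv_eq _ _ hc) -/Y.
  have E1 : Y ⊕ M (Y ⊕ y) = p by rewrite hMy; vt.
  have E2 : Y ⊕ M (Y ⊕ y) ⊕ y ⊕ z = p ⊕ u by rewrite hMy /z; vt.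
  have E3 : Y ⊕ y ⊕ z ⊕ M (Y ⊕ y ⊕ z ⊕ y) = p ⊕ u ⊕ M u.
    have -> : Y ⊕ y ⊕ z ⊕ y = (Y ⊕ y) ⊕ u by rewrite /z; vt.
    by rewrite M_add hMy /z; vt.
  have E4 : Y ⊕ y ⊕ z ⊕ M (Y ⊕ y ⊕ z ⊕ y) ⊕ y ⊕ z = p ⊕ M u.
    have -> : Y ⊕ y ⊕ z ⊕ y = (Y ⊕ y) ⊕ u by rewrite /z; vt.
    by rewrite M_add hMy /z; vt.
  rewrite E4 E3 E2 E1 /Q; ct.
apply: (connect_trans (conn_mv _ _ hc)); exact: conn_mv.
Qed.

Definition perp a b := forall p, Eg (Q p a b).

Lemma eW0 : eW vz = bz d. Proof. exact: eps0. Qed.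

Lemma perp_sym a b : perp a b -> perp b a.
Proof.
move=> h p; have -> : Q p b a = Q p a b.
  rewrite /Q (_ : p ⊕ b ⊕ a = p ⊕ a ⊕ b); last by vt.
  ct.
exact: h.
Qed.

Lemma perp_add a b c : perp a b -> perp a c -> perp a (b ⊕ c).
Proof.
move=> hb hc p; have -> : Q p a (b ⊕ c) = Q p a b ⊕ Q (p ⊕ b) a c.
  rewrite /Q (_ : p ⊕ b ⊕ a = p ⊕ a ⊕ b); last by vt.
  rewrite (_ : p ⊕ b ⊕ c = p ⊕ (b ⊕ c)); last by vt.
  rewrite (_ : p ⊕ a ⊕ b ⊕ c = p ⊕ a ⊕ (b ⊕ c)); last by vt.
  ct.
exact: Eg_add.
Qed.

Lemma perp_refl a : perp a a.
Proof.
move=> p; have -> : Q p a a = bz d.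
  rewrite /Q (_ : p ⊕ a ⊕ a = p); last by vt.
  ct.
exact: Eg_z.
Qed.

Lemma perp_M a : perp a (M a).
Proof. by move=> p; exact: EQ. Qed.

Lemma big_bx_app (I : finType) (P : pred I) (F : I -> V) j :
  (\big[@bx m/vz]_(i | P i) F i) j = \big[addb/false]_(i | P i) F i j.
Proof.
apply: (big_morph (fun v : V => v j)); first by move=> x y; rewrite bxE.
by rewrite bzE.
Qed.

Lemma vdecomp (b : V) : b = \big[@bx m/vz]_(j | b j) evm j.
Proof.
apply: vext => j; rewrite big_bx_app.
rewrite (eq_bigr (fun i => j == i)); last by move=> i _; rewrite ffunE.
rewrite big_mkcond /= (eq_bigr (fun i => (i == j) && b i)).
  by rewrite -big_mkcond /= big_pred1_eq.
by move=> i _; rewrite eq_sym; case: (b i); case: (i == j).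
Qed.

Lemma perp_span a : (forall j, perp a (evm j)) -> forall b, perp a b.
Proof.
move=> h b; rewrite (vdecomp b).
apply: (big_ind (fun x => perp a x)) => //.
  move=> p; rewrite /Q !bx0r; have -> : eW p ⊕ eW (p ⊕ a) ⊕ eW p ⊕ eW (p ⊕ a) = bz d by ct.
  exact: Eg_z.
by move=> x y; apply: perp_add.
Qed.

Definition Pr r := forall i j : 'I_m, val j = (i + r)%N -> perp (evm i) (evm j).

Lemma Pr0 : Pr 0.
Proof. by move=> i j; rewrite addn0 => /val_inj ->; apply: perp_refl. Qed.

Lemma Pr1 : Pr 1.
Proof.
move=> i j hj; have h : (i.+1 < m)%N by move: (ltn_ord j); rewrite hj; lia.
have -> : j = Ordinal h by apply: val_inj; rewrite /= hj addn1.
by rewrite -M_shift; apply: perp_M.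
Qed.

Lemma Pr_step r : Pr r -> Pr r.+2.
Proof.
move=> hr i k hk.
have h1 : (i.+1 < m)%N by move: (ltn_ord k); rewrite hk; lia.
have hj : (i + r.+1 < m)%N by move: (ltn_ord k); rewrite hk; lia.
set i1 := Ordinal h1; set j := Ordinal hj.
have hj1 : (j.+1 < m)%N by move: (ltn_ord k); rewrite hk /=; lia.
have Mi : M (evm i) = evm i1 by rewrite M_shift.
have Mj : M (evm j) = evm k.
  rewrite M_shift; congr evm; apply: val_inj; rewrite /= hk; lia.
set u := evm i ⊕ evm j.
have Mu : M u = evm i1 ⊕ evm k by rewrite /u M_add Mi Mj.
have p1 : perp (evm i1) (evm i) by apply: perp_sym; apply: Pr1; rewrite /= addn1.
have p2 : perp (evm i1) (evm j) by apply: hr; rewrite /=; lia.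
have p3 : perp u (evm i1) by apply: perp_sym; apply: perp_add.
have p4 : perp u (evm k).
  have -> : evm k = M u ⊕ evm i1 by rewrite Mu; vt.
  by apply: perp_add => //; apply: perp_M.
have p5 : perp (evm k) (evm j) by apply: perp_sym; apply: Pr1; rewrite /= hk; lia.
have p6 : perp (evm k) (evm i).
  have -> : evm i = u ⊕ evm j by rewrite /u; vt.
  by apply: perp_add => //; apply: perp_sym.
exact: perp_sym.
Qed.

Lemma Pr_all r : Pr r.
Proof.
suff : Pr r /\ Pr r.+1 by case.
elim: r => [|r [h1 h2]]; first by split; [exact: Pr0 | exact: Pr1].
by split => //; apply: Pr_step.
Qed.

Lemma perp_all a b : perp a b.
Proof.
have hij i j : perp (evm i) (evm j).
  case: (leqP i j) => hij.
    by have := @Pr_all (j - i) i j; rewrite subnKC //; apply.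
  by apply: perp_sym; have := @Pr_all (i - j) j i; rewrite subnKC ?(ltnW hij) //; apply.
have hi i : forall b, perp (evm i) b by apply: perp_span => j; exact: hij.
apply: perp_sym; apply: perp_span => j; apply: perp_sym; exact: hi.
Qed.

Lemma EQ0 a b : Eg (Q vz a b). Proof. exact: perp_all. Qed.

Definition Lb x y := eW x ⊕ eA y ⊕ eA (y ⊕ x).

Lemma ELb x y : Eg (Lb x y).
Proof.
split.
- by rewrite /Lb !nA_add nA_eW !nA_eA.
- rewrite /Lb !Xs_add !Ys_add Xs_eW !Xs_eA Ys_eW !Ys_eA; vt.
move=> c hc.
have hc1 : mv c y (y ⊕ x) \in C by apply: mv_C.
have [_ _ hq] := EQ0 (Ys c ⊕ M (Ys c ⊕ y)) x.
have -> : c ⊕ Lb x y = mv c y (y ⊕ x) ⊕ Q vz (Ys c ⊕ M (Ys c ⊕ y)) x.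
  rewrite (mv_eq _ _ hc) /Q /Lb !bx0 eW0.
  rewrite (_ : Ys c ⊕ M (Ys c ⊕ y) ⊕ y ⊕ (y ⊕ x) = Ys c ⊕ M (Ys c ⊕ y) ⊕ x); last by vt.
  ct.
apply: (connect_trans (conn_mv _ _ hc)); exact: hq.
Qed.

Definition wt (g : Cube) := #|[set i | g i]|.

Lemma wt_ev (g : Cube) i : g i -> wt g = (wt (g ⊕ ev i)).+1.
Proof.
move=> hg; rewrite /wt (cardsD1 i) inE hg add1n; congr _.+1; apply: eq_card => k.
rewrite !inE bxE ffunE; case: (eqVneq k i) => [->|] /=; first by rewrite hg.
by rewrite addbF.
Qed.

Lemma wt_eps (g : Cube) p : wt (g ⊕ eps p) <= (wt g).+1.
Proof.
have [p0|pn0] := eqVneq p (false, vz); first by rewrite p0 eps0 bx0r.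
have [k ->] := eps_nz pn0.
rewrite /wt; apply: (leq_trans (subset_leq_card (_ : _ \subset k |: [set i | g i]))).
  apply/subsetP => j; rewrite !inE bxE ffunE; case: (eqVneq j k) => //= _.
  by rewrite addbF.
by rewrite cardsU1; case: (k \in _).
Qed.

Lemma wt_drop2 (g : Cube) i j p : g i -> g j -> i != j -> wt (g ⊕ ev i ⊕ ev j ⊕ eps p) < wt g.
Proof.
move=> hi hj hij.
have hj' : (g ⊕ ev i) j by rewrite bxE ffunE eq_sym (negbTE hij) addbF.
rewrite (wt_ev hi) (wt_ev hj'); move: (wt_eps (g ⊕ ev i ⊕ ev j) p); lia.
Qed.

Lemma pt_A i y : pt i = (true, y) -> eA y = ev i.
Proof. by move=> h; rewrite /eA -h eps_pt. Qed.
Lemma pt_W i x : pt i = (false, x) -> eW x = ev i.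
Proof. by move=> h; rewrite /eW -h eps_pt. Qed.

Lemma decomp n (g : Cube) : wt g <= n -> nA g = false -> Xs g = Ys g -> Eg g.
Proof.
elim: n g => [|n IH] g hw hn hxy.
  have -> : g = bz d.
    apply: cext => j; rewrite bzE; apply/negP => hj.
    by move: hw; rewrite /wt (cardsD1 j) inE hj.
  exact: Eg_z.
case: (pickP (fun i => g i && (pt i).1)) => [i /andP [gi hA] | hnoA].
  case hpi : (pt i) hA => [b y] /= hb; move: hpi; rewrite hb => hpi.
  case: (pickP (fun j => [&& g j, (pt j).1 & j != i])) => [j /and3P [gj hAj hji] |hno].
    case hpj : (pt j) hAj => [b' y'] /= hb'; move: hpj; rewrite hb' => hpj.
    have hq : Eg (Lb (y ⊕ y') y) by exact: ELb.
    set g' := g ⊕ Lb (y ⊕ y') y.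
    have eg : g' = g ⊕ ev i ⊕ ev j ⊕ eps (false, y ⊕ y').
      rewrite /g' /Lb (_ : y ⊕ (y ⊕ y') = y'); last by vt.
      rewrite (pt_A hpi) (pt_A hpj) /eW; ct.
    have [q1 q2 _] := hq.
    have hg' : Eg g'.
      have hij : i != j by rewrite eq_sym.
      apply: (IH g'); first by rewrite eg; move: (wt_drop2 (false, y ⊕ y') gi gj hij) hw; lia.
      - by rewrite /g' nA_add hn q1.
      - by rewrite /g' Xs_add Ys_add hxy q2.
    have -> : g = g' ⊕ Lb (y ⊕ y') y by rewrite /g' -bxA bxx bx0r.
    exact: Eg_add.
  have : nA g = true.
    rewrite /nA /sm (bigD1 i) //= hpi /= big1 // => k /andP [gk hki].
    by move: (hno k); rewrite gk hki /= andbT => /negbT /negbTE.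
  by rewrite hn.
have [gz|gnz] := eqVneq g (bz d); first by rewrite gz; exact: Eg_z.
have [i gi] : exists i, g i.
  apply/existsP; move: gnz; apply: contraR => /existsPn h.
  by apply/eqP; apply: cext => j; rewrite bzE; apply/negbTE.
have hWi : (pt i).1 = false by move: (hnoA i); rewrite gi /= => ->.
case hpi : (pt i) hWi => [b x] /= hb; move: hpi; rewrite hb => hpi.
have hx0 : x != vz by move: (pt_neq0 i); rewrite hpi; apply: contra => /eqP ->.
have hY : Ys g = vz.
  rewrite /Ys /sm big1 // => k gk; move: (hnoA k); rewrite gk /=.
  by case: (pt k) => -[].
case: (pickP (fun j => g j && (j != i))) => [j /andP [gj hji] |hno].
  have hWj : (pt j).1 = false by move: (hnoA j); rewrite gj /= => ->.
  case hpj : (pt j) hWj => [b' x'] /= hb'; move: hpj; rewrite hb' => hpj.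
  have hq := EQ0 x x'.
  set g' := g ⊕ Q vz x x'.
  have eg : g' = g ⊕ ev i ⊕ ev j ⊕ eps (false, x ⊕ x').
    rewrite /g' /Q eW0 !bx0 (pt_W hpi) (pt_W hpj) /eW; ct.
  have [q1 q2 _] := hq.
  have hg' : Eg g'.
    have hij : i != j by rewrite eq_sym.
    apply: (IH g'); first by rewrite eg; move: (wt_drop2 (false, x ⊕ x') gi gj hij) hw; lia.
    - by rewrite /g' nA_add hn q1.
    - by rewrite /g' Xs_add Ys_add hxy q2.
  have -> : g = g' ⊕ Q vz x x' by rewrite /g' -bxA bxx bx0r.
  exact: Eg_add.
have : Xs g = x.
  rewrite /Xs /sm (bigD1 i) //= hpi /= big1 ?bx0r // => k /andP [gk hki].
  by move: (hno k); rewrite gk hki.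
by rewrite hxy hY => hx; move: hx0; rewrite hx eqxx.
Qed.

Lemma connC c c' : c \in C -> c' \in C -> conn c c'.
Proof.
move=> hc hc'.
have hc1 : nA c = false by move: hc; rewrite inC => /andP [/negbTE].
have hc1' : nA c' = false by move: hc'; rewrite inC => /andP [/negbTE].
have hx : Xs c = Ys c by move: hc; rewrite inC => /andP [_ /eqP].
have hx' : Xs c' = Ys c' by move: hc'; rewrite inC => /andP [_ /eqP].
have [_ _ h] : Eg (c ⊕ c').
  apply: (@decomp (wt (c ⊕ c'))) => //; first by rewrite nA_add hc1 hc1'.
  by rewrite Xs_add Ys_add hx hx'.
by have := h c hc; rewrite bxA bxx bx0.
Qed.

Lemma conn_toC v : exists2 c, c \in C & conn v c.
Proof.
have [p hp hs] := S_nb v.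
have hv : conn v (v ⊕ eps p).
  by apply: step_eps; [exact: hp | by rewrite inE | by rewrite inE | by rewrite hs orbT].
case hC: (v ⊕ eps p \in C); first by exists (v ⊕ eps p).
have hD : v ⊕ eps p \in D by move: hs; rewrite /S inE hC.
have hn : nA (v ⊕ eps p) by move: hD; rewrite inD => /andP [].
exists (up (v ⊕ eps p) vz); first exact: up_C.
apply: (connect_trans hv); apply: conn_up; [exact: goodT | exact: hn | exact: DS | by rewrite inE | by rewrite inE].
Qed.

Lemma conn_all x y : conn x y.
Proof.
have [cx hcx px] := conn_toC x; have [cy hcy py] := conn_toC y.
apply: (connect_trans px); apply: (connect_trans (connC hcx hcy)).
by rewrite (sym_connect_sym (@HA_sym _)).
Qed.

Lemma crit w x y : x != w -> y != w -> connect (HA [set~ w]) x y.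
Proof.
have main : forall n p x, (size p <= n)%N -> x != w -> path Hrel x p -> last x p != w ->
    connect (HA [set~ w]) x (last x p).
  move=> {x y}; elim=> [|n IH] [|z p] x //= hs hx; try by move=> *; exact: connect0.
  case/andP => hxz hp hl.
  case: (eqVneq z w) => [ezw|hzw].
    subst z; case: p hs hp hl => [|b p] /= hs hp hl; first by rewrite eqxx in hl.
    case/andP: hp => hwb hp.
    have hbw : b != w by apply/negP => /eqP e; move: hwb; rewrite e; apply/negP; exact: Hrel_irr.
    apply: (connect_trans (y := b)).
      by apply: loc_all; rewrite // Hrel_sym.
    apply: IH => //; lia.
  apply: (connect_trans (y := z)).
    by apply: connect1; rewrite /HA /= hxz !inE hx hzw.
  by apply: IH => //; lia.
move=> hx hy; have /connectP [p hp hl] := conn_all x y.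
have hp' : path Hrel x p by apply: sub_path hp => a b /andP [].
subst y; exact: (main (size p)).
Qed.

Lemma two_conn (hm : (0 < m)%N) : two_connected Hrel.
Proof.
split.
  rewrite card_ffun card_bool card_ord /dd.
  have h4 : (2 ^ 2 <= 2 ^ m.+1)%N by rewrite leq_exp2l.
  have h3 : (3 <= 2 ^ m.+1 - 1)%N by move: h4; rewrite (_ : 2 ^ 2 = 4)%N //; lia.
  apply: (@leq_trans (2 ^ 3)) => //.
  by rewrite leq_exp2l.
split.
  by move=> x y _ _; exact: conn_all.
by move=> v x y; rewrite !inE => hx hy; exact: crit.
Qed.

Lemma count_code (L : {set Cube})
  (h1 : forall v w i, v \in L -> w \in L -> v ⊕ ev i != w)
  (h2 : forall v w i j, v \in L -> w \in L -> v ⊕ ev i = w ⊕ ev j -> i = j) :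
  (#|L| * d.+1 <= 2 ^ d)%N.
Proof.
pose F (x : Cube * option 'I_d) := if x.2 is Some i then x.1 ⊕ ev i else x.1.
pose X := setX L [set: option 'I_d].
have hX : #|X| = (#|L| * d.+1)%N by rewrite cardsX cardsT card_option card_ord.
have hinj : {in X &, injective F}.
  move=> [a oa] [b ob]; rewrite !inE /= !andbT => ha hb.
  case: oa => [i|]; case: ob => [j|]; rewrite /F /= => e.
  - have eij := h2 _ _ _ _ ha hb e; subst j.
    by have := congr1 (fun v => v ⊕ ev i) e; rewrite -!bxA !bxx !bx0r => ->.
  - by move: (h1 _ _ i ha hb); rewrite e eqxx.
  - by move: (h1 _ _ j hb ha); rewrite -e eqxx.
  - by rewrite e.
rewrite -hX -(card_in_imset hinj).
apply: (leq_trans (max_card _)).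
by rewrite card_ffun card_bool card_ord.
Qed.

Lemma psiC c p : c \in C ->
  (nA (c ⊕ eps p), Xs (c ⊕ eps p) ⊕ Ys (c ⊕ eps p)) = p.
Proof.
rewrite inC => /andP [/negbTE hn /eqP hx].
case: p => b y; rewrite nA_add Xs_add Ys_add nA_eps Xs_eps Ys_eps hn /= hx.
by congr pair; case: b; vt.
Qed.

Lemma psiD c p : c \in D ->
  (nA (c ⊕ eps p), Xs (c ⊕ eps p) ⊕ M (Ys (c ⊕ eps p))) =
  (~~ p.1, if p.1 then M p.2 else p.2).
Proof.
rewrite inD => /andP [hn /eqP hx].
case: p => b y; rewrite nA_add Xs_add Ys_add nA_eps Xs_eps Ys_eps hn /= hx M_add.
by congr pair; case: b; rewrite ?M0; vt.
Qed.

Lemma cardC_bound : (#|C| * d.+1 <= 2 ^ d)%N.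
Proof.
apply: count_code.
  move=> v w i hv hw; apply/negP => /eqP e.
  have := psiC (pt i) hv; rewrite eps_pt e.
  have := psiC (false, vz) hw; rewrite eps0 bx0r => -> h.
  by move: (pt_neq0 i); rewrite -h eqxx.
move=> v w i j hv hw e; apply: pt_inj.
by rewrite -(psiC (pt i) hv) -(psiC (pt j) hw) !eps_pt e.
Qed.

Lemma cardD_bound : (#|D| * d.+1 <= 2 ^ d)%N.
Proof.
apply: count_code.
  move=> v w i hv hw; apply/negP => /eqP e.
  have := psiD (pt i) hv; rewrite eps_pt e.
  have := psiD (false, vz) hw; rewrite eps0 bx0r /= => -> [].
  have := pt_neq0 i; case: (pt i) => -[] y //= hy _ hy0.
  by move: hy; rewrite hy0 eqxx.
move=> v w i j hv hw e; apply: pt_inj.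
have := psiD (pt i) hv; have := psiD (pt j) hw; rewrite !eps_pt e => -> [].
case: (pt i) => [[] y]; case: (pt j) => [[] y'] /= h1 h2; try discriminate.
  by rewrite (M_inj h2).
by rewrite h2.
Qed.

Lemma dS : d.+1 = (2 ^ m.+1)%N.
Proof. by rewrite /dd subn1 prednK // expn_gt0. Qed.

Lemma card_bound (L : {set Cube}) : (#|L| * d.+1 <= 2 ^ d)%N -> (#|L| <= 2 ^ (d - m.+1))%N.
Proof.
rewrite dS => h.
have hd : (m.+1 <= d)%N.
  rewrite /dd; have := ltn_expl m.+1 (isT : 1 < 2); lia.
by rewrite -(leq_pmul2r (expn_gt0 2 m.+1)) -expnD subnK.
Qed.

Lemma tvc_le (T : finType) (E : rel T) (S0 : {set T}) : is_tvc E S0 -> (tvc E <= #|S0|)%N.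
Proof.
move=> h; rewrite /tvc.
have : S0 \in index_enum {set T} by rewrite mem_index_enum.
elim: (index_enum _) => //= a r IH; rewrite big_cons inE => /orP [/eqP <-|hr].
  by rewrite h geq_minl.
case: (is_tvc E a); last exact: IH.
exact: leq_trans (geq_minr _ _) (IH hr).
Qed.

Lemma tvc_bound : (tvc Hrel <= 2 * 2 ^ (d - m.+1))%N.
Proof.
have ht : is_tvc Hrel S.
  apply/andP; split.
    by apply/forallP => x; apply/forallP => y; apply/implyP => /andP [].
  apply/forallP => x; have [p hp hs] := S_nb x; apply/existsP; exists (x ⊕ eps p).
  have [k ek] := eps_nz hp; rewrite hs /= /Hrel hs orbT andbT ek; exact: adj_ev.
apply: (leq_trans (tvc_le ht)); rewrite /S (leq_trans (leq_card_setU _ _)) //.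
rewrite mul2n -addnn leq_add //; apply: card_bound.
  exact: cardC_bound.
exact: cardD_bound.
Qed.

End Cons.

Section Mconc.
Variable k : nat.
Local Notation V := {ffun 'I_k.+2 -> bool}.

Definition Mc (y : V) : V :=
  [ffun j : 'I_k.+2 => (if j == ord0 then y ord_max else y (inord j.-1))
                         (+) ((val j == 1)%N && y ord_max)].

Lemma Mc_add a b : Mc (a ⊕ b) = Mc a ⊕ Mc b.
Proof.
apply/ffunP => j; rewrite !ffunE.
by case: (j == ord0); case: (val j == 1)%N; rewrite /= ?andbT ?andbF; bt.
Qed.

Lemma Mc_ker y : Mc y = bz _ -> y = bz _.
Proof.
move=> h.
have hmax : y ord_max = false by move/ffunP: h => /(_ ord0); rewrite !ffunE eqxx /= addbF.
apply/ffunP => i; rewrite ffunE.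
have [ei|ni] := eqVneq i ord_max; first by rewrite ei.
have hi : (i < k.+1)%N by move: ni (ltn_ord i); rewrite -(inj_eq val_inj) /=; lia.
move/ffunP: h => /(_ (inord i.+1)); rewrite !ffunE.
have -> : (inord i.+1 == ord0 :> 'I_k.+2) = false.
  by apply/negbTE; rewrite -(inj_eq val_inj) /= inordK.
rewrite inordK //= hmax andbF addbF.
by have -> : (inord i : 'I_k.+2) = i by apply: val_inj; rewrite /= inordK.
Qed.

Lemma Mc_inj : injective Mc.
Proof.
move=> a b h; have : Mc (a ⊕ b) = bz _ by rewrite Mc_add h bxx.
move/Mc_ker => /eqP; rewrite bx_eq0 => /eqP //.
Qed.

Lemma Mc_in y n : (0 < n < k.+2)%N ->
  Mc y (inord n) = y (inord n.-1) (+) ((n == 1)%N && y ord_max).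
Proof.
move=> /andP [h0 h1]; rewrite ffunE inordK //.
have -> : (inord n == ord0 :> 'I_k.+2) = false.
  by apply/negbTE; rewrite -(inj_eq val_inj) /= inordK //; lia.
by have -> : val (inord n : 'I_k.+2) = n by rewrite /= inordK.
Qed.

Lemma Mc_N : hNt Mc.
Proof.
move=> y h.
have eq j : y j (+) Mc y j = false by move/ffunP: h => /(_ j); rewrite !bxE !ffunE.
have h0 : y ord0 = y ord_max.
  have := eq ord0; rewrite ffunE eqxx /= addbF.
  by case: (y ord0); case: (y ord_max).
have i0 : (inord 0 : 'I_k.+2) = ord0 by apply: val_inj; rewrite /= inordK.
have imax : (inord k.+1 : 'I_k.+2) = ord_max by apply: val_inj; rewrite /= inordK.
have h1 : y (inord 1) = false.
  have := eq (inord 1); rewrite Mc_in //= i0 h0.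
  by case: (y (inord 1)); case: (y ord_max).
have hall n : (0 < n < k.+2)%N -> y (inord n) = false.
  elim: n => [|n IH] //; case: n IH => [|n] IH hn; first exact: h1.
  have := eq (inord n.+2); rewrite Mc_in //= IH //; last by lia.
  rewrite addbF.
  by rewrite addbF.
have hmax : y ord_max = false by rewrite -imax; apply: hall; lia.
apply/ffunP => j; rewrite ffunE.
have [->|jn0] := eqVneq j ord0; first by rewrite h0.
have -> : j = inord j by apply: val_inj; rewrite /= inordK.
apply: hall; apply/andP; split => //.
by move: jn0; rewrite -(inj_eq val_inj) /=; lia.
Qed.

Lemma Mc_shift (i : 'I_k.+2) (h : (i.+1 < k.+2)%N) : Mc (evm i) = evm (Ordinal h).
Proof.
apply/ffunP => j; rewrite !ffunE.
have hmi : (ord_max == i) = false.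
  by apply/negbTE; rewrite -(inj_eq val_inj) /=; lia.
rewrite hmi andbF addbF.
have [->|jn0] := eqVneq j ord0.
  by apply/esym/negbTE; rewrite -(inj_eq val_inj).
rewrite -!(inj_eq val_inj) /= inordK; last by move: (ltn_ord j); lia.
move: jn0; rewrite -(inj_eq val_inj) /=.
by case: (nat_of_ord j) => //= n _; rewrite eqSS.
Qed.

End Mconc.

Local Open Scope ring_scope.

Lemma real_bound (R : rcfType) (l n : nat) :
  (n <= 2 * 2 ^ (2 ^ l - 1 - l))%N ->
  (n%:R : R) <= 2 * (2 ^+ (2 ^ l - 1 - l) + Num.sqrt (2 ^+ (2 ^ l - 1)) / 2 ^+ l).
Proof.
move=> h; apply: (@le_trans _ _ ((2 * 2 ^ (2 ^ l - 1 - l))%N%:R)); first by rewrite ler_nat.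
rewrite natrM natrX; apply: ler_wpM2l => //; rewrite lerDl.
by apply: divr_ge0; [exact: sqrtr_ge0 | exact: exprn_ge0].
Qed.

Theorem theorem4p4 (l : nat) (hl : (2 <= l)%N) :
  exists H : rel (cube (2 ^ l - 1)),
    [/\ spanning_subgraph (@cube_adj (2 ^ l - 1)) H,
        two_connected H &
        forall R : rcfType,
          ((tvc H)%:R : R) <=
            2 * (2 ^+ (2 ^ l - 1 - l) + Num.sqrt (2 ^+ (2 ^ l - 1)) / 2 ^+ l)].
Proof.
case: l hl => [|[|l]] // _.
case: l => [|k].
  pose M1 : {ffun 'I_1 -> bool} -> {ffun 'I_1 -> bool} := id.
  have hadd : forall a b, M1 (a ⊕ b) = M1 a ⊕ M1 b by [].
  have hinj : injective M1 by [].
  have hsh : forall (i : 'I_1) (h : (i.+1 < 1)%N), M1 (evm i) = evm (Ordinal h).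
    by move=> [[|i] hi] h.
  exists (Hrel M1); split.
  - by split; [exact: Hrel_sym | move=> u v /andP []].
  - exact: (two_conn hadd hinj hsh (or_intror (fun y => erefl)) isT).
  - move=> R; apply: real_bound; exact: (tvc_bound hadd hinj).
exists (Hrel (@Mc k)); split.
- by split; [exact: Hrel_sym | move=> u v /andP []].
- exact: (two_conn (@Mc_add k) (@Mc_inj k) (@Mc_shift k) (or_introl (@Mc_N k)) isT).
- move=> R; apply: real_bound; exact: (tvc_bound (@Mc_add k) (@Mc_inj k)).
Qed.
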